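(* Let $\mathcal{G}=(V,E)$ be a connected hypergraph on $n$ vertices with at least one pair of nonadjacent vertices, and let $\lambda=\frac{2\lambda_2(L_{\mathcal{G}})}{\lambda_n(L_{\mathcal{G}})+\lambda_2(L_{\mathcal{G}})}$. Then for any $S\subset V$, $$\frac{|\delta S|}{|S|}\ge(n-|S|)\,\frac{1-(1-\lambda)^2}{(1-\lambda)^2(n-|S|)+|S|}.$$ Moreover, if $|S|\le n/2$, then $$\frac{|\delta S|}{|S|}\ge\frac{2\lambda_n(L_{\mathcal{G}})\lambda_2(L_{\mathcal{G}})}{\lambda_n(L_{\mathcal{G}})^2+\lambda_2(L_{\mathcal{G}})^2}.$$
   Context: A hypergraph $\mathcal{G}=(V,E)$ has a finite vertex set $V$ and a set $E$ of subsets of $V$ (edges), each of cardinality at least $2$. Distinct vertices are adjacent if some edge contains both. The degree $d_i$ is the number of edges containing $i$. The Laplacian $L_{\mathcal{G}}$ has $(L_{\mathcal{G}})_{ii}=d_i$ and $(L_{\mathcal{G}})_{ij}=-\sum_{e\in E,\, i,j\in e}\frac{1}{|e|-1}$ for $i\ne j$, with eigenvalues $\lambda_1(L_{\mathcal{G}})\le\dots\le\lambda_n(L_{\mathcal{G}})$. The vertex boundary $\delta S$ is the set of vertices in $V\setminus S$ adjacent to some vertex of $S$. *)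

(* Defs.v *)
From HB Require Import structures.
From mathcomp Require Import all_boot all_order all_algebra.
From mathcomp Require Import reals.

Set Implicit Arguments.
Unset Strict Implicit.
Unset Printing Implicit Defensive.

Import Order.TTheory GRing.Theory Num.Theory.
Local Open Scope ring_scope.

Definition is_hypergraph (n : nat) (E : {set {set 'I_n}}) : Prop :=
  forall e, e \in E -> (2 <= #|e|)%N.

Definition hadj (n : nat) (E : {set {set 'I_n}}) : rel 'I_n :=
  fun i j => (i != j) && [exists e in E, (i \in e) && (j \in e)].

Definition hconnected (n : nat) (E : {set {set 'I_n}}) : Prop :=
  forall i j : 'I_n, connect (hadj E) i j.

Definition hdeg (n : nat) (E : {set {set 'I_n}}) (i : 'I_n) : nat :=
  #|[set e in E | i \in e]|.

Definition hlaplacian (R : realType) (n : nat) (E : {set {set 'I_n}})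
  : 'M[R]_n :=
  \matrix_(i, j) if i == j then (hdeg E i)%:R
                 else - \sum_(e in E | (i \in e) && (j \in e)) ((#|e| - 1)%:R)^-1.

Definition vboundary (n : nat) (E : {set {set 'I_n}}) (S : {set 'I_n})
  : {set 'I_n} :=
  [set j | (j \notin S) && [exists i in S, hadj E i j]].

(* s is the list of eigenvalues of A, with multiplicity, in nondecreasing
   order: lambda_1 = s`_0 <= ... <= lambda_n = s`_(n-1). *)
Definition is_spectrum (R : realType) (n : nat) (A : 'M[R]_n) (s : seq R)
  : Prop :=
  sorted <=%R s /\ char_poly A = \prod_(x <- s) ('X - x%:P).

(* Main.v *)
Require Import Defs.
From HB Require Import structures.
From mathcomp Require Import all_boot all_order all_algebra.
From mathcomp Require Import reals.
From mathcomp Require Import ring lra.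
Import Order.TTheory GRing.Theory Num.Theory.
Local Open Scope ring_scope.
Set Implicit Arguments.
Unset Strict Implicit.
Unset Printing Implicit Defensive.

Section LinAlg.
Variable R : realFieldType.

Lemma mat_self_eq0 p m (Z : 'M[R]_(p, m)) : Z *m Z^T = 0 -> Z = 0.
Proof.
move=> H; apply/matrixP => i j; rewrite mxE.
have := congr1 (fun M : 'M[R]_(p,p) => M i i) H; rewrite !mxE => Hs.
have Hnn : forall k, true -> 0 <= Z i k * Z^T k i.
  by move=> k _; rewrite mxE -expr2 sqr_ge0.
have := @psumr_eq0P _ _ _ (fun k => Z i k * Z^T k i) Hnn Hs j isT.
by rewrite mxE => /eqP; rewrite mulf_eq0 orbb => /eqP.
Qed.

Definition dot m (u v : 'rV[R]_m) := (u *m v^T) 0 0.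

Lemma dotE m (u v : 'rV[R]_m) : dot u v = \sum_j u 0 j * v 0 j.
Proof. by rewrite /dot mxE; apply: eq_bigr => j _; rewrite mxE. Qed.

Lemma dotC m (u v : 'rV[R]_m) : dot u v = dot v u.
Proof. by rewrite !dotE; apply: eq_bigr => j _; rewrite mulrC. Qed.

Lemma dotDl m (u w v : 'rV[R]_m) : dot (u + w) v = dot u v + dot w v.
Proof. by rewrite !dotE -big_split; apply: eq_bigr => j _; rewrite mxE mulrDl. Qed.

Lemma dotBl m (u w v : 'rV[R]_m) : dot (u - w) v = dot u v - dot w v.
Proof. by rewrite !dotE -sumrB; apply: eq_bigr => j _; rewrite !mxE mulrBl. Qed.

Lemma dotZl m a (u v : 'rV[R]_m) : dot (a *: u) v = a * dot u v.
Proof. by rewrite !dotE mulr_sumr; apply: eq_bigr => j _; rewrite mxE mulrA. Qed.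

Lemma dotDr m (u w v : 'rV[R]_m) : dot v (u + w) = dot v u + dot v w.
Proof. by rewrite dotC dotDl !(dotC v). Qed.
Lemma dotBr m (u w v : 'rV[R]_m) : dot v (u - w) = dot v u - dot v w.
Proof. by rewrite dotC dotBl !(dotC v). Qed.
Lemma dotZr m a (u v : 'rV[R]_m) : dot v (a *: u) = a * dot v u.
Proof. by rewrite dotC dotZl dotC. Qed.

Lemma dot_mulmx m (u v : 'rV[R]_m) (A : 'M[R]_m) : dot (u *m A) v = dot u (v *m A^T).
Proof. by rewrite /dot trmx_mul trmxK mulmxA. Qed.

Lemma dot_sym m (u v : 'rV[R]_m) (A : 'M[R]_m) : A^T = A -> dot (u *m A) v = dot u (v *m A).
Proof. by move=> HA; rewrite dot_mulmx HA. Qed.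

Lemma dot_ge0 m (u : 'rV[R]_m) : 0 <= dot u u.
Proof. by rewrite dotE sumr_ge0 // => j _; rewrite -expr2 sqr_ge0. Qed.

Lemma dot_eq0 m (u : 'rV[R]_m) : dot u u = 0 -> u = 0.
Proof.
move=> H; apply: mat_self_eq0; apply/matrixP => i j.
by rewrite !ord1 [RHS]mxE -H.
Qed.

Lemma dot0l m (v : 'rV[R]_m) : dot 0 v = 0.
Proof. by rewrite /dot mul0mx mxE. Qed.

Lemma sym_decomp m (B : 'M[R]_m) (y : 'rV[R]_m) : B^T = B ->
  exists y1 w, y1 *m B = 0 /\ y = y1 + w *m B.
Proof.
move=> HB.
have cap0 : (kermx B :&: B)%MS = 0.
  set Z := (kermx B :&: B)%MS.
  have Z1 : Z *m B = 0 by apply/sub_kermxP; rewrite capmxSl.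
  have /submxP [W ZW] : (Z <= B)%MS by rewrite capmxSr.
  apply: mat_self_eq0.
  by rewrite {2}ZW trmx_mul HB mulmxA Z1 mul0mx.
have full : row_full (kermx B + B)%MS.
  rewrite /row_full; apply/eqP.
  have := mxrank_sum_cap (kermx B) B.
  rewrite cap0 mxrank0 addn0 mxrank_ker => ->.
  by rewrite subnK // rank_leq_row.
have /sub_addsmxP [[u1 u2] /= Hy] := submx_full y full.
exists (u1 *m kermx B), u2; split => //.
by rewrite -mulmxA mulmx_ker mulmx0.
Qed.

Section Spec.
Variables (m : nat) (A : 'M[R]_m).
Hypothesis HA : A^T = A.

Definition Pm (t : seq R) : 'M[R]_m := \prod_(r <- t) (A - r%:M).

Lemma comm_AB r x : GRing.comm (A - r%:M) (A - x%:M).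
Proof.
rewrite /GRing.comm !mulrBr !mulrBl -!mulmxE !mul_mx_scalar !mul_scalar_mx.
rewrite !scale_scalar_mx [x * r]mulrC !opprB !addrA addrAC [in RHS]addrAC.
by congr (_ + _); rewrite addrAC.
Qed.

Lemma Pm_comm r t : (A - r%:M) * Pm t = Pm t * (A - r%:M).
Proof. by apply: commr_prod => x _; apply: comm_AB. Qed.

Lemma symB r : (A - r%:M)^T = A - r%:M.
Proof. by rewrite linearB /= tr_scalar_mx HA. Qed.

Lemma split_first r t (y : 'rV[R]_m) : y *m Pm (r :: t) = 0 ->
  exists y1 y2, [/\ y = y1 + y2, y1 *m A = r *: y1, y2 *m Pm t = 0 & dot y1 y2 = 0].
Proof.
move=> Hy.
set B := A - r%:M.
have [y1 [w [H1 Hyw]]] := sym_decomp y (symB r).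
exists y1, (w *m B); split => //.
- by move/eqP: H1; rewrite mulmxBr mul_mx_scalar subr_eq0 => /eqP.
- set z := w *m B *m Pm t.
  have HyB : y *m B = w *m B *m B by rewrite Hyw mulmxDl H1 add0r.
  have E1 : w *m B *m B *m Pm t = 0.
    by rewrite -HyB -mulmxA; move: Hy; rewrite /Pm big_cons -mulmxE.
  have zB : z *m B = 0.
    by rewrite /z -mulmxA mulmxE -Pm_comm -!mulmxE !mulmxA.
  apply: dot_eq0.
  have -> : dot z z = dot z ((w *m Pm t) *m B).
    by rewrite /z -!mulmxA mulmxE Pm_comm -mulmxE.
  by rewrite dotC dot_sym ?symB // zB dotC dot0l.
- by rewrite dotC dot_sym ?symB // H1 dotC dot0l.
Qed.

Variables a b : R.
Definition Gm : 'M[R]_m := (a + b) *: A - A *m A - (a * b)%:M.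
Definition gf (r : R) := (a + b) * r - r ^+ 2 - a * b.

Lemma symG : Gm^T = Gm.
Proof. by rewrite /Gm !linearB /= linearZ /= trmx_mul tr_scalar_mx HA. Qed.

Lemma eigG r (u : 'rV[R]_m) : u *m A = r *: u -> u *m Gm = gf r *: u.
Proof.
move=> Hu; rewrite /Gm /gf !mulmxBr mulmxA Hu -scalemxAl Hu -scalemxAr Hu.
rewrite mul_mx_scalar !scalerA -!scalerBl; congr (_ *: _); ring.
Qed.

Lemma key t (y : 'rV[R]_m) : y *m Pm t = 0 -> (forall r, r \in t -> 0 <= gf r) ->
  0 <= dot (y *m Gm) y.
Proof.
elim: t y => [|r t IH] y.
  by rewrite /Pm big_nil mulmx1 => -> _; rewrite mul0mx dot0l.
move=> /split_first [y1 [y2 [-> H1 H2 H12]]] Hg.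
have Hy1 := eigG H1.
rewrite mulmxDl !dotDl !dotDr Hy1 !dotZl H12 mulr0 addr0.
rewrite dot_sym ?symG // Hy1 dotZr dotC H12 mulr0 add0r.
apply: addr_ge0; first by apply: mulr_ge0; [apply: Hg; rewrite inE eqxx | apply: dot_ge0].
by apply: IH => // x Hx; apply: Hg; rewrite inE Hx orbT.
Qed.

End Spec.
End LinAlg.

Section CS.
Variable R : realFieldType.
Variable T : finType.

Lemma CS_id (c f : T -> R) :
  (\sum_i c i) * (\sum_i c i * f i ^+ 2) - (\sum_i c i * f i) ^+ 2
  = 2^-1 * \sum_i \sum_j c i * c j * (f i - f j) ^+ 2.
Proof.
have E : \sum_i \sum_j c i * c j * (f i - f j) ^+ 2 =
  \sum_i \sum_j ((c i * f i ^+ 2) * c j + c i * (c j * f j ^+ 2))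
  - 2 * \sum_i \sum_j ((c i * f i) * (c j * f j)).
  rewrite mulr_sumr -sumrB; apply: eq_bigr => i _.
  rewrite mulr_sumr -sumrB; apply: eq_bigr => j _; ring.
rewrite E (eq_bigr _ (fun i _ => big_split _ _ _ _ _)).
rewrite big_split /= -!big_distrlr /=.
set X := \sum_i c i; set Y := \sum_i c i * f i ^+ 2; set Z := \sum_i c i * f i.
by field.
Qed.

Lemma CS_ge0 (c f : T -> R) : (forall i, 0 <= c i) ->
  (\sum_i c i * f i) ^+ 2 <= (\sum_i c i) * (\sum_i c i * f i ^+ 2).
Proof.
move=> Hc; rewrite -subr_ge0 CS_id mulr_ge0 // ?invr_ge0 ?ler0n //.
apply: sumr_ge0 => i _; apply: sumr_ge0 => j _.
by rewrite mulr_ge0 ?sqr_ge0 // mulr_ge0.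
Qed.

Lemma CS_eq (c f : T -> R) : (forall i, 0 <= c i) ->
  (\sum_i c i * f i) ^+ 2 = (\sum_i c i) * (\sum_i c i * f i ^+ 2) ->
  forall i j, 0 < c i -> 0 < c j -> f i = f j.
Proof.
move=> Hc /eqP; rewrite eq_sym -subr_eq0 CS_id mulf_eq0 invr_eq0 pnatr_eq0 /= => /eqP H.
move=> i j ci cj.
have nn1 : forall i0, true -> 0 <= \sum_j c i0 * c j * (f i0 - f j) ^+ 2.
  by move=> i0 _; apply: sumr_ge0 => j0 _; rewrite mulr_ge0 ?sqr_ge0 // mulr_ge0.
have Hi := psumr_eq0P nn1 H (i := i) isT.
have nn2 : forall j0, true -> 0 <= c i * c j0 * (f i - f j0) ^+ 2.
  by move=> j0 _; rewrite mulr_ge0 ?sqr_ge0 // mulr_ge0.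
have Hj := psumr_eq0P nn2 Hi (i := j) isT.
move/eqP: Hj; rewrite !mulf_eq0 (gt_eqF ci) (gt_eqF cj) /= orbb subr_eq0.
by move/eqP.
Qed.

End CS.

Section Lap.
Variable R : realType.
Variable m : nat.
Variable E : {set {set 'I_m}}.
Hypothesis HE : is_hypergraph E.

Definition wt (e : {set 'I_m}) : R := ((#|e| - 1)%:R)^-1.
Notation L := (hlaplacian R E).
Definition ind (i : 'I_m) (e : {set 'I_m}) : R := (i \in e)%:R.

Lemma wt_mul e : e \in E -> wt e * (#|e|%:R - 1) = 1.
Proof.
move=> He; have h2 := HE He.
have h1 : (1 <= #|e|)%N by apply: leq_trans h2.
have := natrB R h1; rewrite /wt => <-.
by rewrite mulVf // pnatr_eq0 -lt0n subn_gt0.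
Qed.

Lemma wt_gt0 e : e \in E -> 0 < wt e.
Proof.
move=> He; have h2 := HE He.
by rewrite /wt invr_gt0 ltr0n subn_gt0.
Qed.

Lemma card_sumR (e : {set 'I_m}) : #|e|%:R = \sum_i ind i e :> R.
Proof.
rewrite -sum1_card natr_sum big_mkcond /=; apply: eq_bigr => i _.
by rewrite /ind; case: (i \in e).
Qed.

Lemma L_entry i j : L i j = \sum_(e in E) wt e *
   ((i == j)%:R * ind i e * #|e|%:R - ind i e * ind j e).
Proof.
rewrite mxE; case: eqP => [<-|/eqP ne].
- rewrite /hdeg -sum1_card natr_sum.
  rewrite (eq_bigl (fun e => (e \in E) && (i \in e))); last by move=> e; rewrite inE.
  rewrite big_mkcondr /=; apply: eq_bigr => e He.
  rewrite /ind; case: (i \in e) => /=; last by rewrite !(mul0r,mulr0,mul1r,subr0).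
  by rewrite !mul1r (wt_mul He).
- rewrite big_mkcondr /= -sumrN; apply: eq_bigr => e He.
  rewrite /ind mul0r mul0r sub0r mulrN; congr (- _).
  by case: (i \in e); case: (j \in e); rewrite /= ?mulr1 ?mulr0.
Qed.

Lemma L_sym : L^T = L.
Proof.
apply/matrixP => i j; rewrite mxE !L_entry; apply: eq_bigr => e _.
by rewrite eq_sym; case: eqP => [->|_] //=; rewrite !mul0r [ind j e * _]mulrC.
Qed.

Lemma sum_delta (F : 'I_m -> R) j : \sum_i (i == j)%:R * F i = F j.
Proof.
rewrite (bigD1 j) //= eqxx mul1r big1 ?addr0 // => i /negbTE ->.
by rewrite mul0r.
Qed.

Lemma L_one : (const_mx 1 : 'rV[R]_m) *m L = 0.
Proof.
apply/matrixP => k j; rewrite !mxE.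
under eq_bigr => i _ do rewrite mxE mul1r L_entry.
rewrite exchange_big /=; apply: big1 => e _.
rewrite -mulr_sumr sumrB.
under eq_bigr => i _ do rewrite -mulrA.
by rewrite sum_delta -mulr_suml -card_sumR [#|e|%:R * _]mulrC subrr mulr0.
Qed.

Lemma L_zero i j : i != j -> ~~ hadj E i j -> L i j = 0.
Proof.
move=> ne; rewrite /hadj ne /= negb_exists => /forallP H.
rewrite mxE (negbTE ne) big_pred0 ?oppr0 // => e.
by have := H e; case: (e \in E); case: (i \in e); case: (j \in e).
Qed.

Lemma L_quad (u : 'rV[R]_m) : dot (u *m L) u = \sum_(e in E) wt e *
  ((\sum_i ind i e) * (\sum_i ind i e * u 0 i ^+ 2) - (\sum_i ind i e * u 0 i) ^+ 2).
Proof.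
rewrite dotE.
under eq_bigr => j _ do rewrite mxE mulr_suml.
under eq_bigr => j _ do under eq_bigr => i _ do rewrite L_entry mulr_sumr mulr_suml.
rewrite exchange_big /=.
under eq_bigr => j _ do rewrite exchange_big /=.
rewrite exchange_big /=; apply: eq_bigr => e _.
rewrite (eq_bigr (fun i => \sum_j (wt e * ((j == i)%:R * (ind j e * #|e|%:R * u 0 j * u 0 j))
   - wt e * ((ind i e * u 0 i) * (ind j e * u 0 j))))); last first.
  move=> i _; apply: eq_bigr => j _; rewrite eq_sym.
  by case: eqP => [->|_]; rewrite /=; ring.
under eq_bigr => i _ do rewrite sumrB -mulr_sumr sum_delta -mulr_sumr -big_distrr /=.
rewrite sumrB -!mulr_sumr -mulrBr -big_distrl /= -card_sumR expr2; congr (_ * (_ - _)).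
rewrite mulr_sumr; apply: eq_bigr => i _; ring.
Qed.

Lemma L_psd (u : 'rV[R]_m) : 0 <= dot (u *m L) u.
Proof.
rewrite L_quad; apply: sumr_ge0 => e He.
rewrite mulr_ge0 ?(ltW (wt_gt0 He)) // subr_ge0.
by apply: CS_ge0 => i; rewrite /ind ler0n.
Qed.

Lemma L_ker (u : 'rV[R]_m) : hconnected E -> u *m L = 0 ->
  forall i j, u 0 i = u 0 j.
Proof.
move=> Hc HuL.
have H0 : dot (u *m L) u = 0 by rewrite HuL dot0l.
rewrite L_quad in H0.
have nn : forall e, e \in E -> 0 <= wt e *
  ((\sum_i ind i e) * (\sum_i ind i e * u 0 i ^+ 2) - (\sum_i ind i e * u 0 i) ^+ 2).
  move=> e He; rewrite mulr_ge0 ?(ltW (wt_gt0 He)) // subr_ge0.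
  by apply: CS_ge0 => i; rewrite /ind ler0n.
have Hadj : forall i j, hadj E i j -> u 0 i = u 0 j.
  move=> i j /andP [_ /existsP [e /andP [He /andP [ie je]]]].
  have := psumr_eq0P nn H0 He.
  move/eqP; rewrite mulf_eq0 (gt_eqF (wt_gt0 He)) /= subr_eq0 => /eqP Heq.
  have c0 : forall k, 0 <= ind k e by move=> k; rewrite /ind ler0n.
  have ci : 0 < ind i e by rewrite /ind ie ltr01.
  have cj : 0 < ind j e by rewrite /ind je ltr01.
  exact: (CS_eq (f := fun k => u 0 k) c0 (esym Heq) ci cj).
move=> i j.
have Hcl : closed (hadj E) [pred k | u 0 k == u 0 i].
  by move=> x y /Hadj; rewrite !inE => ->.
have := closed_connect Hcl (Hc i j).
by rewrite !inE eqxx => /esym/eqP.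
Qed.

End Lap.

Lemma spec_facts (R : realType) n' (E : {set {set 'I_n'.+1}}) (s : seq R) :
  is_hypergraph E -> hconnected E -> (0 < n')%N -> is_spectrum (hlaplacian R E) s ->
  [/\ 0 <= s`_1, s`_1 <= s`_n' &
    forall y : 'rV[R]_n'.+1, dot y (const_mx 1) = 0 ->
      0 <= dot (y *m Gm (hlaplacian R E) s`_1 s`_n') y].
Proof.
move=> HE Hc n0 [Hsort Hchar].
set L := hlaplacian R E.
have HA : L^T = L := L_sym R HE.
have Hsz : size s = n'.+1.
  by have := size_char_poly L; rewrite Hchar size_prod_XsubC => -[].
have HP : Pm L s = 0.
  have := Cayley_Hamilton L; rewrite Hchar rmorph_prod /= => <-.
  by rewrite /Pm; apply: eq_bigr => r _; rewrite rmorphB /= horner_mx_X horner_mx_C.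
case: s Hsort Hchar Hsz HP => [//|s0 s'] Hsort Hchar Hsz HP.
have min0 : all (<=%R s0) s' := order_path_min le_trans Hsort.
have s0ge : 0 <= s0.
  have : root (char_poly L) s0 by rewrite Hchar root_prod_XsubC mem_head.
  rewrite -eigenvalue_root_char => /eigenvalueP [v Hv vn0].
  have := L_psd HE v; rewrite Hv dotZl.
  have vpos : 0 < dot v v.
    rewrite lt_neqAle dot_ge0 andbT eq_sym; apply/eqP => /dot_eq0 v0.
    by rewrite v0 eqxx in vn0.
  by rewrite pmulr_lge0.
have s0le : s0 <= 0.
  have : (0 : R) \in s0 :: s'.
    rewrite -root_prod_XsubC -Hchar -eigenvalue_root_char; apply/eigenvalueP.
    exists (const_mx 1); first by rewrite (L_one R HE) scale0r.
    by apply/eqP => /matrixP /(_ 0 0); rewrite !mxE => /eqP; rewrite oner_eq0.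
  rewrite inE => /orP [/eqP <- //|]; by move/(allP min0).
have s00 : s0 = 0 by apply/le_anti; rewrite s0le s0ge.
have Hs' : sorted <=%R s' := path_sorted Hsort.
have szs' : size s' = n' by case: Hsz.
have nth1 : (s0 :: s')`_1 = s'`_0 by [].
have nthn : (s0 :: s')`_n' = s'`_n'.-1 by case: (n') n0.
rewrite nth1 nthn.
have mem_ab : forall r, r \in s' -> s'`_0 <= r <= s'`_n'.-1.
  move=> r /(nthP 0) [k Hk <-]; rewrite szs' in Hk.
  apply/andP; split; apply: (sorted_leq_nth le_trans le_refl 0 Hs');
    rewrite ?inE ?szs' //.
  - by rewrite prednK.
  - by rewrite -ltnS prednK.
have a_in : s'`_0 \in s' by apply: mem_nth; rewrite szs'.
split.
- by have := allP min0 _ a_in; rewrite s00.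
- by case/andP: (mem_ab _ a_in).
move=> y Hy1.
have Hy0 : y *m Pm L (s0 :: s') = 0 by rewrite HP mulmx0.
have [y1 [y2 [Hyy H1 H2 H12]]] := split_first HA Hy0.
rewrite s00 scale0r in H1.
have Hc1 := L_ker HE Hc H1.
have y1e : y1 = y1 0 0 *: const_mx 1.
  by apply/matrixP => i j; rewrite !mxE mulr1 (ord1 i) (Hc1 j 0).
have y10 : y1 = 0.
  apply: dot_eq0.
  have : dot y1 y = dot y1 y1 + dot y1 y2 by rewrite Hyy dotDr.
  rewrite H12 addr0 => <-.
  by rewrite {1}y1e dotZl dotC Hy1 mulr0.
rewrite Hyy y10 add0r.
apply: (key HA H2) => r Hr; rewrite /gf.
have /andP [h1 h2] := mem_ab r Hr.
nra.
Qed.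

Lemma tanner (R : realType) n' (E : {set {set 'I_n'.+1}}) (S : {set 'I_n'.+1}) (a b : R) :
  is_hypergraph E -> 0 < a -> a <= b ->
  (forall y : 'rV[R]_n'.+1, dot y (const_mx 1) = 0 ->
      0 <= dot (y *m Gm (hlaplacian R E) a b) y) ->
  forall mu : R, mu = 1 - 2 * a / (b + a) ->
  (#|S|%:R : R) ^+ 2 <= (#|S|%:R + #|vboundary E S|%:R) *
     (#|S|%:R ^+ 2 / n'.+1%:R + mu ^+ 2 * (#|S|%:R - #|S|%:R ^+ 2 / n'.+1%:R)).
Proof.
move=> HE a0 ab Hsp mu Hmu.
set k : R := #|S|%:R. set d : R := #|vboundary E S|%:R. set m : R := n'.+1%:R.
set L := hlaplacian R E.
set one := (const_mx 1 : 'rV[R]_n'.+1).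
set x := (\row_j ind R j S : 'rV[R]_n'.+1).
set c := 2 / (b + a).
set M := 1%:M - c *: L.
set y := x - (k / m) *: one.
have HA : L^T = L := L_sym R HE.
have HL1 : one *m L = 0 := L_one R HE.
have m0 : m != 0 by rewrite pnatr_eq0.
have ba0 : b + a != 0 by apply/lt0r_neq0; lra.
have dxo : dot x one = k.
  by rewrite dotE /k card_sumR; apply: eq_bigr => j _; rewrite !mxE mulr1.
have doo : dot one one = m.
  by rewrite dotE (eq_bigr (fun _ => 1)) ?sumr_const ?card_ord // => j _; rewrite !mxE mulr1.
have dxx : dot x x = k.
  rewrite dotE /k card_sumR; apply: eq_bigr => j _; rewrite !mxE /ind.
  by case: (j \in S); rewrite ?mulr1 ?mulr0.
have dLone : forall u, dot (u *m L) one = 0.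
  by move=> u; rewrite dot_sym // HL1 dotC dot0l.
have dy1 : dot y one = 0.
  by rewrite /y dotBl dotZl dxo doo divfK // subrr.
have Hspec := Hsp y dy1.
have oneM : one *m M = one.
  by rewrite /M mulmxBr mulmx1 -scalemxAr HL1 scaler0 subr0.
have HM : M^T = M.
  by rewrite /M linearB /= linearZ /= tr_scalar_mx HA.
have dMone : forall u, dot (u *m M) one = dot u one.
  by move=> u; rewrite dot_sym // oneM.
set v := x *m M.
have vdec : v = (k / m) *: one + y *m M.
  by rewrite /v /y mulmxBl -scalemxAl oneM addrC subrK.
set yM := y *m M.
have dvv : dot v v = k ^+ 2 / m + dot yM yM.
  rewrite vdec !dotDl !dotDr !dotZl !dotZr doo (dotC one yM) dMone dy1.
  by rewrite -/yM; field; apply/lt0r_neq0; have := ler0n R n'; lra.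
have dyy : dot y y = k - k ^+ 2 / m.
  by rewrite /y !dotBl !dotBr !dotZl !dotZr dxx dxo doo (dotC one x) dxo; field; apply/lt0r_neq0; have := ler0n R n'; lra.
clearbody y.
set Y1 := dot (y *m L) y.
set Y2 := dot (y *m L) (y *m L).
have yMe : yM = y - c *: (y *m L) by rewrite /yM /M mulmxBr mulmx1 -scalemxAr.
have dyM : dot yM yM = dot y y - 2 * c * Y1 + c ^+ 2 * Y2.
  rewrite yMe !dotBl !dotBr !dotZl !dotZr (dotC y (y *m L)) -/Y1 -/Y2; ring.
have dG : dot (y *m Gm L a b) y = (a + b) * Y1 - Y2 - a * b * dot y y.
  rewrite /Gm !mulmxBr -scalemxAr mul_mx_scalar mulmxA !dotBl !dotZl.
  by rewrite [dot (y *m L *m L) y]dot_sym.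
have Hbound : dot yM yM <= mu ^+ 2 * dot y y.
  have E1 : mu ^+ 2 * dot y y - dot yM yM = c ^+ 2 * dot (y *m Gm L a b) y.
    by rewrite dyM dG Hmu /c; field.
  by rewrite -subr_ge0 E1 mulr_ge0 ?sqr_ge0.
set N := S :|: vboundary E S.
have vj0 : forall j, j \notin N -> v 0 j = 0.
  move=> j; rewrite !inE negb_or => /andP [jS]; rewrite jS /= => /existsPn Hn.
  rewrite /v mxE; apply: big1 => i _.
  rewrite !mxE /ind; case iS : (i \in S); last by rewrite mul0r.
  have ij : i != j by apply/eqP => ij; move: jS; rewrite -ij iS.
  have := Hn i; rewrite iS /= => nadj.
  have := L_zero R ij nadj; rewrite mxE (negbTE ij) => ->.
  by rewrite mulr0 subr0 mul1r.
have dvone : dot v one = k by rewrite /v dMone dxo.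
have sumN : \sum_j ind R j N * v 0 j = k.
  rewrite -dvone dotE; apply: eq_bigr => j _; rewrite [one 0 j]mxE mulr1 /ind.
  by case jN : (j \in N); rewrite ?mul1r // mul0r vj0 ?jN.
have cardN : #|N|%:R = k + d :> R.
  rewrite /N cardsU (_ : S :&: vboundary E S = set0) ?cards0 ?subn0 ?natrD //.
  by apply/setP => j; rewrite !inE; case: (j \in S).
have Hcs := @CS_ge0 _ _ (fun j => ind R j N) (fun j => v 0 j)
  (fun j => (ler0n R (j \in N))).
rewrite sumN -card_sumR cardN in Hcs.
have Hvv : \sum_j ind R j N * v 0 j ^+ 2 <= dot v v.
  rewrite dotE; apply: ler_sum => j _; rewrite /ind -expr2.
  by case: (j \in N); rewrite ?mul1r // mul0r sqr_ge0.
have kd0 : 0 <= k + d by rewrite /k /d -natrD ler0n.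
apply: (le_trans Hcs); apply: ler_wpM2l => //.
apply: (le_trans Hvv); rewrite dvv lerD2l -dyy.
exact: Hbound.
Qed.

Lemma alg_final (R : realFieldType) (a b k d p mu : R) :
  0 < a -> a <= b -> 0 < k -> 0 <= p -> 0 <= d -> mu = 1 - 2 * a / (b + a) ->
  k ^+ 2 <= (k + d) * (k ^+ 2 / (k + p) + mu ^+ 2 * (k - k ^+ 2 / (k + p))) ->
  p * (1 - mu ^+ 2) / (mu ^+ 2 * p + k) <= d / k /\
  (k <= p -> 2 * b * a / (b ^+ 2 + a ^+ 2) <= d / k).
Proof.
move=> a0 ab k0 p0 d0 Hmu H.
have kp : 0 < k + p by lra.
have ba : 0 < b + a by lra.
have mu0 : 0 <= mu.
  rewrite Hmu subr_ge0 ler_pdivrMr //; lra.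
have mu1 : mu <= 1.
  rewrite Hmu lerBlDr lerDl divr_ge0 //; lra.
set q := mu ^+ 2.
have q0 : 0 <= q by rewrite /q sqr_ge0.
have q1 : q <= 1 by rewrite /q; nra.
have E1 : k ^+ 2 / (k + p) + q * (k - k ^+ 2 / (k + p)) = k * (k + q * p) / (k + p).
  by field; apply/lt0r_neq0.
rewrite E1 mulrA ler_pdivlMr // in H.
have H2 : k * (k + p) <= (k + d) * (k + q * p).
  have : k * (k * (k + p)) <= k * ((k + d) * (k + q * p)).
    by move: H; rewrite expr2; set u := k + p; set w := k + q * p; nra.
  by rewrite ler_pM2l.
have D0 : 0 < q * p + k by nra.
have G1 : p * (1 - q) / (q * p + k) <= d / k.
  rewrite ler_pdivrMr // mulrAC ler_pdivlMr //; nra.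
split => // kp2.
apply: le_trans G1.
set T := 2 * b * a / (b ^+ 2 + a ^+ 2).
have hT : T * (1 + q) = 1 - q.
  rewrite /T /q Hmu; field.
  apply/andP; split; apply/lt0r_neq0; nra.
have T0 : 0 <= T by rewrite /T divr_ge0 //; nra.
rewrite ler_pdivlMr // -hT; nra.
Qed.

Lemma main_m (R : realType) (n' : nat) (E : {set {set 'I_n'.+1}})
  (s : seq R) :
  is_hypergraph E ->
  hconnected E ->
  (exists i j : 'I_n'.+1, (i != j) && ~~ hadj E i j) ->
  is_spectrum (hlaplacian R E) s ->
  let lam2 := s`_1 in
  let lamn := s`_(n'.+1.-1) in
  let lam := 2 * lam2 / (lamn + lam2) in
  forall S : {set 'I_n'.+1}, S != set0 ->
    (#|vboundary E S|%:R / #|S|%:R : R)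
      >= (n'.+1 - #|S|)%:R * (1 - (1 - lam) ^+ 2)
         / ((1 - lam) ^+ 2 * (n'.+1 - #|S|)%:R + #|S|%:R)
    /\ ((2 * #|S| <= n'.+1)%N ->
        (#|vboundary E S|%:R / #|S|%:R : R)
          >= 2 * lamn * lam2 / (lamn ^+ 2 + lam2 ^+ 2)).
Proof.
move=> HE Hc [i [j /andP [ij _]]] Hsp lam2 lamn lam S HS.
have n0 : (0 < n')%N.
  by have := max_card [set i; j]; rewrite cards2 ij card_ord.
have [a0 ab Hy] := spec_facts HE Hc n0 Hsp.
have k0 : 0 < (#|S|%:R : R) by rewrite ltr0n card_gt0.
have kn : (#|S| <= n'.+1)%N by have := max_card S; rewrite card_ord.
rewrite natrB //.
move: a0; rewrite le_eqVlt => /orP [/eqP a00 | apos].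
- have lam0 : lam = 0 by rewrite /lam /lam2 -a00 mulr0 mul0r.
  rewrite lam0 subr0 expr1n subrr mulr0 mul0r; split => [|_].
    by rewrite divr_ge0.
  by rewrite /lam2 -a00 mulr0 mul0r divr_ge0.
- have Ht := @tanner _ _ _ S _ _ HE apos ab Hy (1 - lam) (erefl _).
  have em : (n'.+1%:R : R) = #|S|%:R + (n'.+1%:R - #|S|%:R) by rewrite subrKC.
  rewrite em in Ht.
  have p0 : 0 <= (n'.+1%:R : R) - #|S|%:R by rewrite subr_ge0 ler_nat.
  have [G1 G2] := alg_final apos ab k0 p0 (ler0n _ _) (erefl _) Ht.
  split => // h2; apply: G2.
  rewrite lerBrDr -natrD ler_nat addnn -mul2n //.
Qed.

Theorem corollary4 (R : realType) (n : nat) (E : {set {set 'I_n}})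
  (s : seq R) :
  is_hypergraph E ->
  hconnected E ->
  (exists i j : 'I_n, (i != j) && ~~ hadj E i j) ->
  is_spectrum (hlaplacian R E) s ->
  let lam2 := s`_1 in
  let lamn := s`_(n.-1) in
  let lam := 2 * lam2 / (lamn + lam2) in
  forall S : {set 'I_n}, S != set0 ->
    (#|vboundary E S|%:R / #|S|%:R : R)
      >= (n - #|S|)%:R * (1 - (1 - lam) ^+ 2)
         / ((1 - lam) ^+ 2 * (n - #|S|)%:R + #|S|%:R)
    /\ ((2 * #|S| <= n)%N ->
        (#|vboundary E S|%:R / #|S|%:R : R)
          >= 2 * lamn * lam2 / (lamn ^+ 2 + lam2 ^+ 2)).
Proof.
case: n E s => [|n'] E s HE Hc Hex.
  by case: Hex => -[].
exact: main_m HE Hc Hex.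
Qed.
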